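(* Let $\mathbb G$ be the projective Fraïssé limit of the class $\mathcal G$ of finite connected graphs with confluent epimorphisms. Then the edge relation $E(\mathbb G)$ is transitive.
   Context: A graph is a pair $A=(V(A),E(A))$ with $E(A)\subseteq V(A)^2$ reflexive and symmetric. A topological graph is a graph whose vertex set is a compact, second countable, zero-dimensional (metrizable) space and whose edge set is closed in $V^2$. A homomorphism maps edges to edges; an epimorphism is a homomorphism surjective on vertices and on edges (continuous, when the domain is a topological graph). A subset $S\subseteq V(A)$ of a (topological) graph is disconnected if there are nonempty closed subsets $P,Q$ of $S$ with $P\cup Q=S$ and no edge $\langle a,b\rangle$ with $a\in P$, $b\in Q$; otherwise connected. Components are maximal connected subsets. An epimorphism $f\colon A\to B$ is confluent if for every connected $Q\subseteq V(B)$ and every component $C$ of $f^{-1}(Q)$, $f(C)=Q$. $\mathcal G$ is the class of finite connected graphs with confluent epimorphisms; it is a projective Fraïssé class. Its projective Fraïssé limit $\mathbb G$ is the unique (up to isomorphism) topological graph such that: (1) for each $A\in\mathcal G$ there is a confluent epimorphism $\mathbb G\to A$; (2) for $A,B\in\mathcal G$ and confluent epimorphisms $f\colon\mathbb G\to A$, $g\colon B\to A$ there is a confluent epimorphism $h\colon\mathbb G\to B$ with $f=g\circ h$; (3) for every $\varepsilon>0$ (with respect to a fixed compatible metric) there are $A\in\mathcal G$ and a confluent epimorphism $f\colon\mathbb G\to A$ all of whose point-preimages have diameter $<\varepsilon$. *)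

(* Defs.v *)
From HB Require Import structures.
From mathcomp Require Import all_boot all_order all_algebra.
From mathcomp Require Import all_classical all_reals topology.
Set Implicit Arguments. Unset Strict Implicit. Unset Printing Implicit Defensive.
Import Order.TTheory GRing.Theory Num.Theory.
Local Open Scope classical_set_scope.
Local Open Scope ring_scope.

(** * Generic graph notions.  A "graph" on a carrier X is an edge relation
    EX : X -> X -> Prop; [clX S P] says "P is a closed subset of S"
    (relative closedness in the subspace S). *)

Definition gdisconnected {X : Type} (clX : set X -> set X -> Prop)
  (EX : X -> X -> Prop) (S : set X) : Prop :=
  exists P Q : set X, [/\ P !=set0 /\ Q !=set0, clX S P, clX S Q,
    P `|` Q = S & forall a b, P a -> Q b -> ~ EX a b].

Definition gconnected {X : Type} (clX : set X -> set X -> Prop)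
  (EX : X -> X -> Prop) (S : set X) : Prop := ~ gdisconnected clX EX S.

Definition gcomponent {X : Type} (clX : set X -> set X -> Prop)
  (EX : X -> X -> Prop) (S C : set X) : Prop :=
  [/\ C `<=` S, gconnected clX EX C &
      forall D, C `<=` D -> D `<=` S -> gconnected clX EX D -> D = C].

Definition gepi {X Y : Type} (EX : X -> X -> Prop) (EY : Y -> Y -> Prop)
  (f : X -> Y) : Prop :=
  [/\ (forall a b, EX a b -> EY (f a) (f b)),
      (forall y, exists x, f x = y) &
      (forall c d, EY c d -> exists a b, [/\ EX a b, f a = c & f b = d])].

Definition gconfluent {X Y : Type}
  (clX : set X -> set X -> Prop) (EX : X -> X -> Prop)
  (clY : set Y -> set Y -> Prop) (EY : Y -> Y -> Prop) (f : X -> Y) : Prop :=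
  forall Q : set Y, gconnected clY EY Q ->
  forall C : set X, gcomponent clX EX (f @^-1` Q) C -> f @` C = Q.

Definition fin_closed {V : Type} (S P : set V) : Prop := P `<=` S.

Definition fin_edge {V : finType} (e : rel V) : V -> V -> Prop :=
  fun a b => e a b.

Definition fin_conn_graph (V : finType) (e : rel V) : Prop :=
  [/\ (exists v : V, True), reflexive e, symmetric e &
      gconnected (@fin_closed V) (fin_edge e) [set: V]].

Definition fin_confluent_epi (W V : finType) (e' : rel W) (e : rel V)
  (g : W -> V) : Prop :=
  gepi (fin_edge e') (fin_edge e) g /\
  gconfluent (@fin_closed W) (fin_edge e') (@fin_closed V) (fin_edge e) g.

Definition top_closed {T : topologicalType} (S P : set T) : Prop :=
  P `<=` S /\ exists C : set T, closed C /\ P = C `&` S.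

Definition top_edge {T : Type} (E : set (T * T)) : T -> T -> Prop :=
  fun a b => E (a, b).

Definition topological_graph {T : topologicalType} (E : set (T * T)) : Prop :=
  [/\ compact [set: T], @second_countable T, zero_dimensional T,
      closed E & (forall x, E (x, x)) /\ (forall x y, E (x, y) -> E (y, x))].

(** Continuity of a map into a finite graph, whose vertex set carries the
    discrete topology: all point preimages are open. *)
Definition cont_to_discrete {T : topologicalType} {V : Type} (f : T -> V) : Prop :=
  forall v : V, open (f @^-1` [set v]).

Definition top_confluent_epi {T : topologicalType} (E : set (T * T))
  (V : finType) (e : rel V) (f : T -> V) : Prop :=
  [/\ cont_to_discrete f, gepi (top_edge E) (fin_edge e) f &
      gconfluent (@top_closed T) (top_edge E) (@fin_closed V) (fin_edge e) f].

Definition diam_lt {R : realType} {T : metricType R} (A : set T) (eps : R) : Prop :=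
  exists2 d : R, d < eps & forall x y, A x -> A y -> mdist x y <= d.

(** The characterization (1)-(3) of the projective Fraïssé limit of 𝒢. *)
Definition is_proj_fraisse_limit_G {R : realType} {T : metricType R}
  (E : set (T * T)) : Prop :=
  [/\ topological_graph E,
   (* (1) *)
   (forall (V : finType) (e : rel V), fin_conn_graph e ->
      exists f : T -> V, top_confluent_epi E e f),
   (* (2) *)
   (forall (V W : finType) (e : rel V) (e' : rel W),
      fin_conn_graph e -> fin_conn_graph e' ->
      forall (f : T -> V) (g : W -> V),
      top_confluent_epi E e f -> fin_confluent_epi e' e g ->
      exists h : T -> W, top_confluent_epi E e' h /\ f = g \o h) &
   (* (3) *)
   (forall eps : R, 0 < eps ->
      exists (V : finType) (e : rel V) (f : T -> V),
      [/\ fin_conn_graph e, top_confluent_epi E e f &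
          forall v : V, diam_lt (f @^-1` [set v]) eps])].

(* Main.v *)
Require Import Defs.
From HB Require Import structures.
From mathcomp Require Import all_boot all_order all_algebra.
From mathcomp Require Import all_classical all_reals topology.
Local Open Scope classical_set_scope.
Import Order.TTheory GRing.Theory Num.Theory.

Local Open Scope ring_scope.
Section Gen.
Variables (X Y : Type) (eX : X -> X -> Prop) (eY : Y -> Y -> Prop) (g : X -> Y).
Hypothesis surj : forall y, exists x, g x = y.
Hypothesis lift : forall u v, eY u v -> exists p q, [/\ eX p q, g p = u & g q = v].
Hypothesis fib : forall p q, g p = g q -> eX p q.

Lemma preim_conn Q : gconnected (@fin_closed Y) eY Q ->
  gconnected (@fin_closed X) eX (g @^-1` Q).
Proof.
move=> cQ [P1 [P2 [[ne1 ne2] s1 s2 U nE]]]; apply: cQ.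
exists (g @` P1), (g @` P2); split.
- case: ne1 => p1 Hp1; case: ne2 => p2 Hp2.
  by split; [exists (g p1); exists p1 | exists (g p2); exists p2].
- by move=> _ [p Hp <-]; exact: s1.
- by move=> _ [p Hp <-]; exact: s2.
- apply/seteqP; split.
  + by move=> _ [[p Hp <-]|[p Hp <-]]; [exact: s1|exact: s2].
  + move=> y Qy; have [p gp] := surj y.
    have : (g @^-1` Q) p by rewrite /preimage /= gp.
    rewrite -U => -[Hp|Hp]; [left|right]; by exists p.
- move=> _ _ [p1 Hp1 <-] [p2 Hp2 <-] /lift [p [q [epq gp gq]]].
  have Qp : (g @^-1` Q) p by rewrite /preimage /= gp; exact: s1.
  have Qq : (g @^-1` Q) q by rewrite /preimage /= gq; exact: s2.
  rewrite -U in Qp Qq.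
  case: Qp => Hp; last by apply: (nE p1 p) => //; apply: fib.
  case: Qq => Hq; first by apply: (nE q p2) => //; apply: fib.
  exact: (nE p q).
Qed.

Lemma gen_confluent : gconfluent (@fin_closed X) eX (@fin_closed Y) eY g.
Proof.
move=> Q cQ C [Csub Ccon Cmax].
have -> : C = g @^-1` Q by apply/esym/Cmax => //; exact: preim_conn.
apply/seteqP; split; first by move=> _ [p Hp <-].
by move=> y Qy; have [p gp] := surj y; exists p => //; rewrite /preimage /= gp.
Qed.
End Gen.
Section Split.
Local Set Implicit Arguments. Local Unset Strict Implicit.
Variables (V : finType) (e : rel V) (a b c : V).
Hypotheses (er : reflexive e) (es : symmetric e) (ab : a != b) (cb : c != b) (ac : a != c).

Definition gB (p : option V) : V := if p is Some v then v else b.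
Definition forb (p q : option V) : bool :=
  [|| (p == Some b) && (q == Some c), (q == Some b) && (p == Some c),
      (p == None) && (q == Some a) | (q == None) && (p == Some a)].
Definition eB : rel (option V) := fun p q => e (gB p) (gB q) && ~~ forb p q.

Lemma forb_sym p q : forb p q = forb q p.
Proof. by rewrite /forb; case: (p == Some b) (q == Some b) (p == Some c) (q == Some c)
  (p == None) (q == None) (p == Some a) (q == Some a) => [] [] [] [] [] [] [] []. Qed.

Lemma forb_fib p q : gB p = gB q -> forb p q = false.
Proof.
case: p => [u|]; case: q => [v|] //= H; rewrite /forb /= ?(inj_eq Some_inj).
- rewrite H; case: (eqVneq v b) => [->|vb]; last by rewrite !andFb.
  by rewrite eq_sym (negbTE cb) !andbF.
- by rewrite H (eq_sym b a) (negbTE ab) andbF.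
- by rewrite -H (eq_sym b a) (negbTE ab) andbF.
Qed.

Lemma eB_fib p q : gB p = gB q -> eB p q.
Proof. by move=> H; rewrite /eB H er forb_fib. Qed.

Lemma eB_refl : reflexive eB.
Proof. by move=> p; apply: eB_fib. Qed.

Lemma eB_sym : symmetric eB.
Proof. by move=> p q; rewrite /eB es forb_sym. Qed.

Lemma eB_hom p q : eB p q -> e (gB p) (gB q).
Proof. by case/andP. Qed.

Lemma eB_lift u v : e u v -> exists p q, [/\ eB p q, gB p = u & gB q = v].
Proof.
move=> euv.
have [/andP[/eqP ub /eqP vc]|h1] := boolP ((u == b) && (v == c)).
  exists None, (Some v); split => //; rewrite /eB /= -ub euv /forb /=.
  by rewrite vc !(inj_eq Some_inj) (negbTE cb) (eq_sym c a) (negbTE ac) !andbF.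
have [/andP[/eqP uc /eqP vb]|h2] := boolP ((u == c) && (v == b)).
  exists (Some u), None; split => //; rewrite /eB /= -vb euv /forb /=.
  by rewrite uc !(inj_eq Some_inj) (negbTE cb) (eq_sym c a) (negbTE ac) !andbF.
exists (Some u), (Some v); split => //; rewrite /eB /= euv /forb /=.
by rewrite !(inj_eq Some_inj) (negbTE h1) andbC (negbTE h2).
Qed.

Lemma gB_surj y : exists x, gB x = y.
Proof. by exists (Some y). Qed.

Lemma gB_only p v : v != b -> gB p = v -> p = Some v.
Proof. by case: p => [u|] /= vb H; subst => //; rewrite eqxx in vb. Qed.

Lemma gB_b p : gB p = b -> p = Some b \/ p = None.
Proof. by case: p => [u|] /= H; [left; rewrite H|right]. Qed.

Lemma forb_ab : ~~ eB (Some a) None.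
Proof. by rewrite /eB /forb /= eqxx !orbT andbF. Qed.
Lemma forb_bc : ~~ eB (Some b) (Some c).
Proof. by rewrite /eB /forb /= !eqxx andbF. Qed.
End Split.
Lemma sep (R : realType) (T : metricType R) (E : set (T * T)) x z :
  closed E -> ~ E (x, z) -> exists2 eps : R, 0 < eps &
   forall u w, mdist x u < eps -> mdist z w < eps -> ~ E (u, w).
Proof.
move=> cE nE.
have : nbhs (x, z) (~` E).
  by apply: open_nbhs_nbhs; split => //; exact: closed_openC.
move=> /nbhs_ballP [e e0 He]; exists e => // u w xu zw.
apply: (He (u, w)); split => /=; by rewrite ballEmdist.
Qed.

Theorem mainTheorem2 (R : realType) (T : metricType R) (E : set (T * T)) :
  is_proj_fraisse_limit_G E ->
  forall x y z : T, E (x, y) -> E (y, z) -> E (x, z).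
Proof.
move=> [[_ _ _ cE _] H1 H2 H3] x y z Exy Eyz.
have [//|nE] := pselect (E (x, z)).
exfalso.
have [eps eps0 Heps] := @sep _ _ _ _ _ cE nE.
have [V [e [f [fc [fcont [fhom fsurj flift] fconf] fdiam]]]] := H3 eps eps0.
have near w0 w : f w = f w0 -> mdist w0 w < eps.
  move=> fw; have [d deps Hd] := fdiam (f w0).
  by apply: le_lt_trans deps; apply: Hd => //.
have [fne er es fconn] := fc.
set a := f x; set b := f y; set c := f z.
have eab : e a b by exact: (fhom x y Exy).
have ebc : e b c by exact: (fhom y z Eyz).
have nac : ~ e a c.
  move=> /flift [u [w [Euw fu fw]]].
  exact: (Heps u w (near _ _ fu) (near _ _ fw) Euw).
have ac : a != c by apply/eqP => ac; apply: nac; rewrite -ac er.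
have ab : a != b by apply/eqP => ab; apply: nac; rewrite ab.
have cb : c != b by apply/eqP => cb; apply: nac; rewrite -cb in eab.
have fibB : forall p q, gB b p = gB b q -> fin_edge (eB e a b c) p q.
  by move=> p q; apply: (eB_fib er ab cb).
have liftB : forall u v, fin_edge e u v -> exists p q,
    [/\ fin_edge (eB e a b c) p q, gB b p = u & gB b q = v].
  by move=> u v; apply: (eB_lift cb ac).
have fcB : fin_conn_graph (eB e a b c).
  split.
  - by exists None.
  - exact: (eB_refl er ab cb).
  - exact: (eB_sym a b c es).
  - rewrite -(preimage_setT (gB b)).
    exact: (@preim_conn _ _ _ _ _ (gB_surj b) liftB fibB _ fconn).
have gcB : fin_confluent_epi (eB e a b c) e (gB b).
  split; last exact: (@gen_confluent _ _ _ _ _ (gB_surj b) liftB fibB).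
  split => //; [by move=> p q; apply: eB_hom | exact: gB_surj].
have [h [[_ [hhom _ _] _] fgh]] :=
  H2 V (option V : finType) e (eB e a b c) fc fcB f (gB b)
     (And3 fcont (And3 fhom fsurj flift) fconf) gcB.
have fg w : gB b (h w) = f w by rewrite fgh.
have hx : h x = Some a by apply: (gB_only ab cb ab); rewrite fg.
have hz : h z = Some c by apply: (gB_only ab cb cb); rewrite fg.
have hy : gB b (h y) = b by rewrite fg.
have e1 := hhom x y Exy; have e2 := hhom y z Eyz.
rewrite /fin_edge hx in e1; rewrite /fin_edge hz in e2.
case: (gB_b hy) => hy'; rewrite hy' in e1 e2.
- by move: (forb_bc e a b c); rewrite e2.
- by move: (forb_ab e a b c); rewrite e1.
Qed.
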